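(* For every integer $s\geq 3$, the graph $\operatorname{KG}(2s+2,2)_{s-\operatorname{stab}}$ is not hom-idempotent, i.e., there is no homomorphism from $\operatorname{KG}(2s+2,2)_{s-\operatorname{stab}}\Box\operatorname{KG}(2s+2,2)_{s-\operatorname{stab}}$ to $\operatorname{KG}(2s+2,2)_{s-\operatorname{stab}}$.
   Context: For integers $s,k\geq 2$ and $n\geq ks$, a subset $S\subseteq[n]=\{1,\dots,n\}$ is $s$-stable if $s\leq |i-j|\leq n-s$ for all distinct $i,j\in S$. The $s$-stable Kneser graph $\operatorname{KG}(n,k)_{s-\operatorname{stab}}$ has as vertices the $s$-stable $k$-subsets of $[n]$, two vertices being adjacent iff they are disjoint. $G\Box H$ denotes the cartesian product of graphs (vertex set $V(G)\times V(H)$, $(g,h)\sim(g',h')$ iff one coordinate is equal and the other coordinates are adjacent). A homomorphism is an edge-preserving map between vertex sets. *)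

(* Defs.v *)
From mathcomp Require Import all_boot all_order.
Set Implicit Arguments. Unset Strict Implicit. Unset Printing Implicit Defensive.

(* [n] = {1..n} is represented by 'I_n = {0..n-1} (shift by one; differences
   |i - j| are unchanged). *)

Definition absdiff (i j : nat) : nat := (i - j) + (j - i).

Definition stable (n s : nat) (S : {set 'I_n}) : bool :=
  [forall i in S, forall j in S,
     (i != j) ==> ((s <= absdiff i j) && (absdiff i j <= n - s))].

Definition stab_vertex (n k s : nat) (S : {set 'I_n}) : bool :=
  (#|S| == k) && @stable n s S.

Definition SKG_V (n k s : nat) : Type := {S : {set 'I_n} | @stab_vertex n k s S}.

Definition SKG_adj (n k s : nat) (A B : SKG_V n k s) : bool :=
  [disjoint (val A) & (val B)].

Definition box_adj (V W : eqType) (e : V -> V -> bool) (f : W -> W -> bool)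
  (x y : V * W) : bool :=
  ((x.1 == y.1) && f x.2 y.2) || ((x.2 == y.2) && e x.1 y.1).

Definition is_hom (U V : Type) (eU : U -> U -> bool) (eV : V -> V -> bool)
  (phi : U -> V) : Prop :=
  forall x y, eU x y -> eV (phi x) (phi y).

(* Main.v *)
Require Import Defs.
From mathcomp Require Import all_boot all_order zify.

Set Implicit Arguments. Unset Strict Implicit. Unset Printing Implicit Defensive.

Lemma notri s (a b c : nat) : 2 < s ->
  s <= absdiff a b <= s + 2 -> s <= absdiff a c <= s + 2 ->
  s <= absdiff b c <= s + 2 -> False.
Proof. rewrite /absdiff => *; lia. Qed.

Lemma card_sum (T : finType) (A : {set T}) : #|A| = \sum_x (x \in A : nat).
Proof. by rewrite -sum1_card big_mkcond. Qed.

Lemma dcount (I J : finType) (R : I -> J -> bool) :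
  \sum_i #|[set j | R i j]| = \sum_j #|[set i | R i j]|.
Proof.
under eq_bigr do rewrite card_sum.
rewrite exchange_big /=; apply: eq_bigr => j _.
by rewrite card_sum; apply: eq_bigr => i _; rewrite !inE.
Qed.

Section S.
Variable s : nat.
Hypothesis s3 : 2 < s.
Local Notation n := (2 * s + 2).
Local Notation V := (SKG_V n 2 s).
Local Notation adj := (@SKG_adj n 2 s).

Lemma npos : 0 < n. Proof. lia. Qed.

Definition plus (a : 'I_n) k : 'I_n := Ordinal (ltn_pmod (a + k) npos).

Lemma modcase (a k : nat): a < n -> k <= n ->
  (a + k) %% n = if a + k < n then a + k else a + k - n.
Proof.
move=> an kn; case: ltnP => h; first by rewrite modn_small.
have -> : a + k = (a + k - n) + n by lia.
by rewrite modnDr modn_small //; lia.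
Qed.

Lemma vtx_card (y : V) : #|val y| = 2.
Proof. by case: y => S /= /andP [/eqP]. Qed.

Lemma vtx_stab (y : V) (i j : 'I_n) : i \in val y -> j \in val y -> i != j ->
  s <= absdiff i j <= s + 2.
Proof.
case: y => S /= /andP [_ /forallP H] hi hj hij.
move: (H i); rewrite hi /= => /forallP /(_ j); rewrite hj /= => /implyP /(_ hij).
move=> /andP [h1 h2]; apply/andP; split => //; lia.
Qed.

Lemma pair_eq (y : V) (a b : 'I_n) : a \in val y -> b \in val y -> a != b ->
  val y = [set a; b].
Proof.
move=> ha hb hab; apply/esym/eqP; rewrite eqEcard vtx_card cards2 hab andbT.
by apply/subsetP => x; rewrite !inE => /orP [] /eqP ->.
Qed.

Lemma meet (y y' : V) : ~~ adj y y' -> exists q, q \in val y /\ q \in val y'.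
Proof.
rewrite /SKG_adj -setI_eq0 => /set0Pn [q]; rewrite inE => /andP [h1 h2].
by exists q.
Qed.

Lemma meet' (y y' : V) q : q \in val y -> q \in val y' -> ~~ adj y y'.
Proof. move=> h1 h2; rewrite /SKG_adj -setI_eq0; apply/set0Pn; exists q; by rewrite inE h1 h2. Qed.

Lemma plusE (a : 'I_n) k : k <= n ->
  ((plus a k : nat) = a + k /\ a + k < n) \/ ((plus a k : nat) = a + k - n /\ n <= a + k).
Proof.
move=> kn; have an := ltn_ord a; rewrite /= modcase //.
by case: ltnP => h; [left|right].
Qed.

Lemma gvP (a : 'I_n) d : d < 3 -> @stab_vertex n 2 s [set a; plus a (s + d)].
Proof.
move=> d3; have an := ltn_ord a.
have hv : ((plus a (s+d) : nat) = a + (s+d) /\ a + (s+d) < n) \/ ((plus a (s+d) : nat) = a + (s+d) - n /\ n <= a + (s+d)).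
  by apply: plusE; lia.
have hab : a != plus a (s + d).
  by apply/eqP => /(congr1 (@nat_of_ord _)); case: hv => -[-> ?]; lia.
rewrite /stab_vertex cards2 hab /=.
apply/forallP => i; apply/implyP; rewrite !inE => hi.
apply/forallP => j; apply/implyP; rewrite !inE => hj.
case/orP: hi => /eqP ->; case/orP: hj => /eqP ->; rewrite ?eqxx; try by []; apply/implyP => _;
 rewrite /absdiff; case: hv => -[-> ?]; apply/andP; split; lia.
Qed.

Definition g (a : 'I_n) (d : 'I_3) : V := @exist _ (fun S => is_true (@stab_vertex n 2 s S)) _ (gvP a (ltn_ord d)).

Definition Sq (q : 'I_n) : {set V} := [set y : V | q \in val y].

Lemma inv_g (y : V) q : q \in val y -> exists d, y = g q d.
Proof.
move=> hq.
have : 1 < #|val y| by rewrite vtx_card.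
case/card_gt1P => u [v [hu hv huv]].
have [b [hb hbq]] : exists b, b \in val y /\ b != q.
  case: (eqVneq u q) => [eu|nu]; last by exists u.
  by exists v; split => //; rewrite -eu eq_sym.
have hqb : q != b by rewrite eq_sym.
have st := vtx_stab hq hb hqb.
have Hy := pair_eq hq hb hqb.
have qn := ltn_ord q; have bn := ltn_ord b.
have hbq' : (b : nat) != q by [].
have d3 : (if q < b then b - q - s else b + s + 2 - q) < 3.
  by move: st; rewrite /absdiff; case: (ltnP q b); lia.
exists (Ordinal d3); apply: val_inj; rewrite /= Hy; congr [set _; _].
apply: val_inj.
have hw : ((plus q (s + Ordinal d3) : nat) = q + (s + Ordinal d3) /\ q + (s + Ordinal d3) < n) \/
  ((plus q (s + Ordinal d3) : nat) = q + (s + Ordinal d3) - n /\ n <= q + (s + Ordinal d3)).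
  by apply: plusE => /=; case: (ltnP q b); lia.
move: hw st hbq' => /=; rewrite /absdiff; case: (ltnP q b) => h -[] -[-> ?]; lia.
Qed.

Lemma g_has (a : 'I_n) d : a \in val (g a d).
Proof. by rewrite /= !inE eqxx. Qed.

Lemma g_inj (a : 'I_n) : injective (g a).
Proof.
move=> d d' /(congr1 val) /= E.
have : plus a (s + d) \in [set a; plus a (s + d')] by rewrite -E !inE eqxx orbT.
rewrite !inE => /orP [] /eqP /(congr1 (@nat_of_ord _)) H.
- have hd := ltn_ord d.
  have h1 : s + d <= n by lia.
  have an := ltn_ord a.
  case: (plusE a h1) => -[E1 ?]; lia.
- apply: val_inj => /=.
  have hd := ltn_ord d; have hd' := ltn_ord d'.
  have h1 : s + d <= n by lia.
  have h2 : s + d' <= n by lia.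
  case: (plusE a h1) => -[E1 ?]; case: (plusE a h2) => -[E2 ?]; lia.
Qed.

Lemma Sq_img (q : 'I_n) : Sq q = g q @: setT.
Proof.
apply/setP => y; rewrite !inE; apply/idP/imsetP.
- by case/inv_g => d ->; exists d.
- by case=> d _ ->; apply: g_has.
Qed.

Lemma card_Sq (q : 'I_n) : #|Sq q| = 3.
Proof. by rewrite Sq_img card_imset ?cardsT ?card_ord //; apply: g_inj. Qed.

Lemma family (T : {set V}) :
  (forall y y', y \in T -> y' \in T -> y != y' -> ~~ adj y y') ->
  #|T| <= 3 /\ (#|T| = 3 -> exists q, T = Sq q).
Proof.
move=> HT.
have [le1|] := leqP #|T| 1; first by split; [lia | move=> h; lia].
case/card_gt1P => y1 [y2 [h1 h2 h12]].
have [q [q1 q2]] := meet (HT _ _ h1 h2 h12).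
have sub : T \subset Sq q.
  apply/subsetP => y hy; rewrite inE; apply/negPn/negP => qy.
  have n1 : y != y1 by apply: contraNneq qy => ->.
  have n2 : y != y2 by apply: contraNneq qy => ->.
  have [c [c1 c2]] := meet (HT _ _ hy h1 n1).
  have [d [d1 d2]] := meet (HT _ _ hy h2 n2).
  have cq : c != q by apply: contraNneq qy => <-.
  have dq : d != q by apply: contraNneq qy => <-.
  have qc : q != c by rewrite eq_sym.
  have qd : q != d by rewrite eq_sym.
  have cd : c != d.
    apply/negP => /eqP ecd; move/negP: h12; apply; apply/eqP; apply: val_inj.
    have c2' : c \in val y2 by rewrite ecd.
    by rewrite (pair_eq q1 c2 qc) (pair_eq q2 c2' qc).
  have s1 := vtx_stab q1 c2 qc.
  have s2 := vtx_stab q2 d2 qd.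
  have s3' := vtx_stab c1 d1 cd.
  exact: (notri s3 s1 s2 s3').
split; first by rewrite -(card_Sq q) subset_leq_card.
move=> h3; exists q; apply/eqP; rewrite eqEcard sub card_Sq h3 leqnn //.
Qed.

Lemma sum_cards (F : V -> V) :
  \sum_(p : 'I_n) #|[set y | p \in val (F y)]| = \sum_(y : V) 2.
Proof.
rewrite (dcount (fun p y => p \in val (F y))); apply: eq_bigr => y _.
rewrite -[RHS](vtx_card (F y)); apply: eq_card => x; by rewrite inE.
Qed.

Lemma row (f : V -> V) : (forall y y', adj y y' -> adj (f y) (f y')) ->
  forall p, #|[set y | p \in val (f y)]| = 3 /\ exists q, [set y | p \in val (f y)] = Sq q.
Proof.
move=> Hf.
have fam p := @family [set y | p \in val (f y)].
have {}fam p : #|[set y | p \in val (f y)]| <= 3 /\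
   (#|[set y | p \in val (f y)]| = 3 -> exists q, [set y | p \in val (f y)] = Sq q).
  apply: fam => y y'; rewrite !inE => h h' _; apply/negP => /Hf; apply/negP.
  exact: meet' h h'.
have sumE : \sum_(p : 'I_n) #|[set y | p \in val (f y)]| = \sum_(p : 'I_n) 3.
  rewrite sum_cards -(sum_cards id); apply: eq_bigr => p _.
  by rewrite -(card_Sq p).
have H0 : \sum_(p : 'I_n) (3 - #|[set y | p \in val (f y)]|) == 0.
  by rewrite sumnB ?sumE ?subnn // => p _; case: (fam p).
move/eqP: H0 => /eqP; rewrite sum_nat_eq0 => /forallP H p.
have := H p; rewrite /= subn_eq0 => h3.
case: (fam p) => le H3.
have e3 : #|[set y | p \in val (f y)]| = 3 by apply/eqP; rewrite eqn_leq le h3.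
by split => //; apply: H3.
Qed.

End S.

Theorem mainTheorem5 (s : nat) : 3 <= s ->
  ~ exists phi : SKG_V (2 * s + 2) 2 s * SKG_V (2 * s + 2) 2 s ->
                 SKG_V (2 * s + 2) 2 s,
      is_hom (box_adj (@SKG_adj (2 * s + 2) 2 s) (@SKG_adj (2 * s + 2) 2 s))
             (@SKG_adj (2 * s + 2) 2 s) phi.
Proof.
move=> s3 [phi Hphi].
have rowh x : forall y y', SKG_adj y y' -> SKG_adj (phi (x,y)) (phi (x,y')).
  by move=> y y' h; apply: Hphi; rewrite /box_adj /= eqxx h.
have colh y : forall x x', SKG_adj x x' -> SKG_adj (phi (x,y)) (phi (x',y)).
  by move=> x x' h; apply: Hphi; rewrite /box_adj /= eqxx h orbT.
pose p0 : 'I_(2*s+2) := Ordinal (npos s3).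
have exq x : exists q, [set y | p0 \in val (phi (x,y))] == Sq q.
  by case: (row s3 (rowh x) p0) => _ [q ->]; exists q.
pose r x := xchoose (exq x).
have hr x : [set y | p0 \in val (phi (x,y))] = Sq (r x).
  by apply/eqP; exact: xchooseP (exq x).
pose k a := #|[set x | r x == a]|.
have hk a (d : 'I_3) : k a + k (plus s3 a (s + d)) = 3.
  have := (row s3 (colh (g s3 a d)) p0).1.
  have -> : [set x | p0 \in val (phi (x, g s3 a d))] =
     [set x | r x == a] :|: [set x | r x == plus s3 a (s + d)].
    apply/setP => x; rewrite !inE.
    by have := hr x; move/setP/(_ (g s3 a d)); rewrite !inE.
  rewrite cardsU.
  have -> : [set x | r x == a] :&: [set x | r x == plus s3 a (s + d)] = set0.
    apply/setP => x; rewrite !inE; apply/negP => /andP [/eqP -> /eqP E].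
    by have := vtx_card (g s3 a d); rewrite /= cards2 -E eqxx.
  by rewrite cards0 subn0.
pose P j := iter j (fun a => plus s3 a (s + @ord0 2)) p0.
have hP j : (P j : nat) = (j * s) %% (2 * s + 2).
  elim: j => [|j IH]; first by rewrite mod0n.
  by rewrite /P iterS -/(P j) /= IH addn0 modnDml mulSn addnC.
have k0 : k p0 <= 3 by have := hk p0 ord0; lia.
have hkP j : k (P j) = if odd j then 3 - k p0 else k p0.
  elim: j => [|j IH] //=.
  have := hk (P j) ord0; rewrite IH /=.
  by case: (odd j) => /=; lia.
have := odd_double_half s; rewrite -muln2.
case os : (odd s) => /= hs.
- have e1 : (s + 1) * s = s./2 * (2 * s + 2) + (s + 1) by nia.
  have ev : P (s + 1) = plus s3 p0 (s + @Ordinal 3 1 isT).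
    apply: val_inj; rewrite /= hP e1 modnMDl modn_small; last by lia.
    by [].

  have := hk p0 (@Ordinal 3 1 isT); rewrite -ev hkP addn1 /= os /=; lia.
- have e1 : (s + 1) * s = s./2 * (2 * s + 2) by nia.
  have ev : P (s + 1) = p0.
    by apply: val_inj; rewrite /= hP e1 modnMl.
  have := hkP (s + 1); rewrite ev addn1 /= os /=; lia.
Qed.
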